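(* Let $n\geq 3$, $d\geq 2$, $\ell\in\mathbb{R}_{>0}^n$, and let $P=(\mathbf{v}_1,\ldots,\mathbf{v}_{n-1})\in V_d(\ell)$ with $2\leq\dim(P)<n-1$. Set $\mathbf{v}_0=\mathbf{v}_n=\mathbf{0}$. For each $i=1,\ldots,n-1$, let $L_i$ denote the line through $\mathbf{v}_{i-1}$ and $\mathbf{v}_{i+1}$, and let $U_i$ denote the linear span of $\{\mathbf{v}_j\}_{j\neq i,\,1\leq j\leq n-1}$. Then there exists $i\in\{1,\ldots,n-1\}$ such that $\mathbf{v}_i\in U_i\setminus L_i$.
   Context: $V_d(\ell)=\{(\mathbf{v}_1,\ldots,\mathbf{v}_{n-1})\in(\mathbb{R}^d)^{n-1} : \|\mathbf{v}_i-\mathbf{v}_{i-1}\|=l_i,\ i=1,\ldots,n\}$ with $\mathbf{v}_0=\mathbf{v}_n=\mathbf{0}$. $\dim(P)$ is the dimension of the linear span of $\{\mathbf{v}_1,\ldots,\mathbf{v}_{n-1}\}$. *)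

(* Defs.v *)
From mathcomp Require Import all_boot all_order all_algebra.
From mathcomp Require Import reals.
Set Implicit Arguments. Unset Strict Implicit. Unset Printing Implicit Defensive.
Import Order.TTheory GRing.Theory Num.Theory.
Local Open Scope ring_scope.

Definition eucnorm (R : realType) (d : nat) (x : 'rV[R]_d) : R :=
  Num.sqrt (\sum_(j < d) x 0 j ^+ 2).

(* A polygon is given by v : nat -> 'rV_d; only v 0, ..., v n matter.
   P = (v 1, ..., v (n-1)) lies in V_d(l) iff v 0 = v n = 0 and
   ||v i - v (i-1)|| = l i for i = 1..n. *)
Definition in_Vd (R : realType) (d n : nat) (l : nat -> R)
  (v : nat -> 'rV[R]_d) : Prop :=
  v 0%N = 0 /\ v n = 0 /\
  forall i : nat, (1 <= i <= n)%N -> eucnorm (v i - v i.-1) = l i.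

Definition polymx (R : realType) (d n : nat) (v : nat -> 'rV[R]_d)
  : 'M[R]_(n.-1, d) := \matrix_(j < n.-1) v j.+1.

Definition dimP (R : realType) (d n : nat) (v : nat -> 'rV[R]_d) : nat :=
  \rank (polymx n v).

(* U_i = linear span of { v_j : j <> i, 1 <= j <= n-1 } (row space) *)
Definition Umx (R : realType) (d n : nat) (v : nat -> 'rV[R]_d) (i : nat)
  : 'M[R]_(n.-1, d) := \matrix_(j < n.-1) (if j.+1 == i then 0 else v j.+1).

Definition on_line (R : realType) (d : nat) (a b x : 'rV[R]_d) : Prop :=
  exists t : R, x = a + t *: (b - a).

(* Main.v *)
Require Import Defs.
From mathcomp Require Import all_boot all_order all_algebra.
From mathcomp Require Import reals.
From mathcomp Require Import ring zify.
From Stdlib Require Import Classical.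
Import Order.TTheory GRing.Theory Num.Theory.
Local Open Scope ring_scope.

Section Aux.
Variable R : realType.
Variable d : nat.

Lemma lin_subA p (a b x : 'rV[R]_d) t (U : 'M[R]_(p, d)) :
  x = a + t *: (b - a) -> t != 1 -> (x <= U)%MS -> (b <= U)%MS -> (a <= U)%MS.
Proof.
move=> e t1 xU bU.
have t1' : 1 - t != 0 by rewrite subr_eq0 eq_sym.
have -> : a = (1 - t)^-1 *: x + ((1 - t)^-1 * - t) *: b.
  apply/rowP => j; rewrite e !mxE; field; exact: t1'.
by apply: addmx_sub; apply: scalemx_sub.
Qed.

Lemma lin_subB p (a b x : 'rV[R]_d) t (U : 'M[R]_(p, d)) :
  x = a + t *: (b - a) -> t != 0 -> (x <= U)%MS -> (a <= U)%MS -> (b <= U)%MS.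
Proof.
move=> e t0 xU aU.
have -> : b = t^-1 *: x + (t^-1 * (t - 1)) *: a.
  apply/rowP => j; rewrite e !mxE; field; exact: t0.
by apply: addmx_sub; apply: scalemx_sub.
Qed.

Lemma Umx_mul n (v : nat -> 'rV[R]_d) (i : 'I_n.-1) (u : 'rV[R]_n.-1) :
  u *m Umx n v i.+1 = u *m polymx n v - u 0 i *: v i.+1.
Proof.
apply/rowP => k; rewrite !mxE (bigD1 i) //= [X in _ = X - _](bigD1 i) //=.
rewrite !mxE eqxx mxE mulr0 add0r addrAC subrr add0r.
apply: eq_bigr => j ji; rewrite !mxE.
by rewrite eqSS; have /negbTE -> : (j : nat) != i by [].
Qed.

End Aux.

Section Main.
Variable R : realType.
Variables n d : nat.
Variable l : nat -> R.
Variable v : nat -> 'rV[R]_d.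
Hypothesis v0 : v 0%N = 0.
Hypothesis vn : v n = 0.
Hypothesis Hlen : forall i : nat, (1 <= i <= n)%N -> eucnorm (v i - v i.-1) = l i.
Hypothesis Hl : forall i : nat, (1 <= i <= n)%N -> 0 < l i.

Lemma distinct k : (1 <= k <= n)%N -> v k != v k.-1.
Proof.
move=> hk; apply/negP => /eqP e.
have := Hlen _ hk; rewrite e subrr /eucnorm big1 ?sqrtr0.
  by move=> h; have := Hl _ hk; rewrite -h ltxx.
by move=> j _; rewrite mxE expr2 mulr0.
Qed.

Lemma inU i j : j != i -> (j <= n)%N -> (v j <= Umx n v i)%MS.
Proof.
move=> ji jn.
case: (posnP j) => [->|j0]; first by rewrite v0 sub0mx.
case: (ltngtP j n) jn => // [jlt _|-> _]; last by rewrite vn sub0mx.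
have hj : (j.-1 < n.-1)%N by lia.
have := row_sub (Ordinal hj) (Umx n v i).
by rewrite rowK /= prednK // (negbTE ji).
Qed.

Lemma exS : (dimP n v < n.-1)%N ->
  exists i, (1 <= i <= n.-1)%N && (v i <= Umx n v i)%MS.
Proof.
move=> hr; set A := polymx n v.
have hK : kermx A != 0.
  by rewrite -mxrank_eq0 mxrank_ker subn_eq0 -ltnNge.
have [k hk] : exists k, row k (kermx A) != 0.
  apply: NNPP => hne; move/eqP: hK; apply; apply/row_matrixP => k.
  rewrite row0; apply/eqP; apply/negPn/negP => h; apply: hne; by exists k.
set u := row k (kermx A).
have uA : u *m A = 0 by apply/sub_kermxP; exact: row_sub.
have [j hj] : exists j, u 0 j != 0.
  apply: NNPP => hne; move/eqP: hk; apply; apply/rowP => j.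
  rewrite mxE; apply/eqP; apply/negPn/negP => h; apply: hne; exists j.
  by move: h; rewrite /u !mxE.
exists j.+1; apply/andP; split; first by rewrite /= ltn_ord.
have e := @Umx_mul R d n v j u; rewrite -/A uA sub0r in e.
have -> : v j.+1 = (- (u 0 j)^-1 *: u) *m Umx n v j.+1.
  by rewrite -scalemxAl e scaleNr scalerN opprK scalerA mulVf // scale1r.
exact: submxMl.
Qed.

End Main.

Theorem lemma3p2 (R : realType) (n d : nat) (l : nat -> R)
  (v : nat -> 'rV[R]_d) :
  (3 <= n)%N -> (2 <= d)%N ->
  (forall i : nat, (1 <= i <= n)%N -> 0 < l i) ->
  in_Vd n l v ->
  (2 <= dimP n v)%N -> (dimP n v < n.-1)%N ->
  exists2 i : nat, (1 <= i <= n.-1)%N &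
    (v i <= Umx n v i)%MS /\ ~ on_line (v i.-1) (v i.+1) (v i).
Proof.
move=> Hn Hd Hl [v0 [vn Hlen]] H2 Hlt.
have dist := @distinct R n d l v Hlen Hl.
have inU' := @inU R n d v v0 vn.
apply: NNPP => Hneg.
have H : forall i, (1 <= i <= n.-1)%N -> (v i <= Umx n v i)%MS ->
    exists t, v i = v i.-1 + t *: (v i.+1 - v i.-1).
  move=> i hi hs; apply: NNPP => hno; apply: Hneg; exists i => //.
have step : forall i, (1 <= i)%N -> (i.+1 <= n.-1)%N ->
    (v i <= Umx n v i)%MS = (v i.+1 <= Umx n v i.+1)%MS.
  move=> i h1 h2; apply/idP/idP => hs.
  - case: (boolP (v i.+1 <= Umx n v i.+1)%MS) => // hns; exfalso.
    have [t e] := H i ltac:(lia) hs.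
    have [t0|t0] := eqVneq t 0.
      move: e; rewrite t0 scale0r addr0 => /eqP; apply/negP; apply: dist; lia.
    move/negP: hns; apply; apply: (@lin_subB _ _ _ _ _ _ _ _ e t0).
      by apply: inU'; lia.
    by apply: inU'; lia.
  - case: (boolP (v i <= Umx n v i)%MS) => // hns; exfalso.
    have [t e] := H i.+1 ltac:(lia) hs.
    have [t1|t1] := eqVneq t 1.
      move: e; rewrite t1 scale1r addrC subrK /= => /eqP; rewrite eq_sym.
      apply/negP; apply: (dist i.+2); lia.
    move/negP: hns; apply; apply: (@lin_subA _ _ _ _ _ _ _ _ e t1).
      by apply: inU'; lia.
    by apply: inU'; lia.
have [i0 /andP [hi0 hs0]] := @exS R n d v Hlt.
have allS1 : forall i, (1 <= i <= n.-1)%N ->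
    (v i <= Umx n v i)%MS = (v 1%N <= Umx n v 1%N)%MS.
  elim => // i IH hi.
  case: (posnP i) => [->|ip] //.
  rewrite -step; [apply: IH|..]; lia.
have allS : forall i, (1 <= i <= n.-1)%N -> (v i <= Umx n v i)%MS.
  by move=> i hi; rewrite allS1 // -(allS1 i0 hi0).
have span : forall k, (1 <= k)%N -> (k <= n.-1)%N -> forall j, (j <= k.+1)%N ->
    (v j <= v k + v k.+1)%MS.
  elim => // k IH _ hk j hj.
  case: (posnP k) => [k0|kp].
    subst k.
    case: j hj => [_|[_|[_|//]]]; first by rewrite v0 sub0mx.
      exact: addsmxSl.
    exact: addsmxSr.
  have hvk : (v k <= v k.+1 + v k.+2)%MS.
    have [t e] := H k.+1 ltac:(lia) (allS k.+1 ltac:(lia)).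
    have [t1|t1] := eqVneq t 1.
      exfalso; move: e; rewrite t1 scale1r addrC subrK /= => /eqP.
      rewrite eq_sym; apply/negP; apply: (dist k.+2); lia.
    exact: (@lin_subA _ _ _ _ _ _ _ _ e t1 (addsmxSl _ _) (addsmxSr _ _)).
  case: (ltngtP j k.+2) hj => // [hj' _|-> _]; last exact: addsmxSr.
  apply: submx_trans (IH kp ltac:(lia) j ltac:(lia)) _.
  by rewrite addsmx_sub hvk addsmxSl.
have hP : (polymx n v <= v n.-1 + v n)%MS.
  apply/row_subP => j; rewrite /polymx rowK.
  have := span n.-1 ltac:(lia) (leqnn _) j.+1 ltac:(have := ltn_ord j; lia).
  by rewrite prednK //; lia.
move: hP; rewrite vn addsmx0 => /mxrankS.
rewrite -/(dimP n v) => hr.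
have := rank_leq_row (v n.-1); lia.
Qed.
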